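(* Let $x\cdot y$ be a PA-structure on $(\mathfrak{g},\mathfrak{n})$, where $\mathfrak{g}$ and $\mathfrak{n}$ are $2$-step nilpotent, and suppose that $$[L(x)+R(x),\mathrm{ad}(y)]=\mathrm{ad}(x\cdot y+y\cdot x)\quad\text{for all }x,y\in V. \qquad (\ast)$$ Then for all $x,y\in V$: $$[L(x)+R(x),\mathrm{ad}(y)]=[L(y)+R(y),\mathrm{ad}(x)],$$ $$2[L(x),\mathrm{ad}(y)]+2[\mathrm{ad}(x),L(y)]=[\mathrm{ad}(y),\mathrm{Ad}(x)]+[\mathrm{Ad}(y),\mathrm{ad}(x)].$$
   Context: Let $K$ be a field of characteristic zero and $V$ a finite-dimensional vector space over $K$. Let $\mathfrak{g}=(V,[\,,])$ and $\mathfrak{n}=(V,\{\,,\})$ be two Lie algebra structures on $V$. A post-Lie algebra structure (PA-structure) on the pair $(\mathfrak{g},\mathfrak{n})$ is a $K$-bilinear product $x\cdot y$ on $V$ satisfying, for all $x,y,z\in V$: (i) $x\cdot y-y\cdot x=[x,y]-\{x,y\}$; (ii) $[x,y]\cdot z=x\cdot(y\cdot z)-y\cdot(x\cdot z)$; (iii) $x\cdot\{y,z\}=\{x\cdot y,z\}+\{y,x\cdot z\}$. Write $L(x)(y)=x\cdot y$, $R(x)(y)=y\cdot x$, $\mathrm{ad}(x)(y)=[x,y]$, $\mathrm{Ad}(x)(y)=\{x,y\}$; brackets of operators are commutators in $\mathrm{End}(V)$. A Lie algebra is called $2$-step nilpotent here if it is nilpotent of class at most $2$, i.e. all brackets of the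 form $[[x,y],z]$ vanish. *)

(* Defs.v *)
From HB Require Import structures.
From mathcomp Require Import all_boot all_order all_algebra.
Set Implicit Arguments. Unset Strict Implicit. Unset Printing Implicit Defensive.
Import GRing.Theory.
Local Open Scope ring_scope.

Definition bilinear_prod (K : fieldType) (V : vectType K) (m : V -> V -> V) : Prop :=
  (forall a x y z, m (a *: x + y) z = a *: m x z + m y z) /\
  (forall a x y z, m x (a *: y + z) = a *: m x y + m x z).

Definition is_lie (K : fieldType) (V : vectType K) (br : V -> V -> V) : Prop :=
  [/\ bilinear_prod br,
      (forall x, br x x = 0) &
      (forall x y z, br x (br y z) + br y (br z x) + br z (br x y) = 0)].

Definition two_step_nilpotent (K : fieldType) (V : vectType K) (br : V -> V -> V) : Prop :=
  forall x y z, br (br x y) z = 0.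

(* Post-Lie algebra structure on (g, n) = ((V, br), (V, nbr)). *)
Definition is_PA (K : fieldType) (V : vectType K)
    (br nbr prod : V -> V -> V) : Prop :=
  [/\ bilinear_prod prod,
      (forall x y, prod x y - prod y x = br x y - nbr x y),
      (forall x y z, prod (br x y) z = prod x (prod y z) - prod y (prod x z)) &
      (forall x y z, prod x (nbr y z) = nbr (prod x y) z + nbr y (prod x z))].

Definition Lop (K : fieldType) (V : vectType K) (prod : V -> V -> V) (x : V) : V -> V :=
  fun y => prod x y.
Definition Rop (K : fieldType) (V : vectType K) (prod : V -> V -> V) (x : V) : V -> V :=
  fun y => prod y x.
Definition adop (K : fieldType) (V : vectType K) (br : V -> V -> V) (x : V) : V -> V :=
  fun y => br x y.
Definition opadd (K : fieldType) (V : vectType K) (f g : V -> V) : V -> V :=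
  fun v => f v + g v.
Definition opscale (K : fieldType) (V : vectType K) (a : K) (f : V -> V) : V -> V :=
  fun v => a *: f v.
Definition opcomm (K : fieldType) (V : vectType K) (f g : V -> V) : V -> V :=
  fun v => f (g v) - g (f v).

(* Main.v *)
Require Import Defs.
From HB Require Import structures.
From mathcomp Require Import all_boot all_order all_algebra.
From mathcomp Require Import ring.
From Stdlib Require Import FunctionalExtensionality.
Import GRing.Theory.
Local Open Scope ring_scope.

Import VectorInternalTheory.
Lemma zmod_ident (K : fieldType) (V : vectType K) (a b c d e f g h : V) :
  e + f - (g + h) = a + b - (c + d) ->
  (a - c) *+ 2 + (g - e) *+ 2 = - (c - d) - - (a - b) + (- (e - f) - - (g - h)).
Proof.
move/(congr1 (@VectorInternalTheory.v2r _ V)) => H.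
apply: VectorInternalTheory.v2r_inj; move/rowP: H => H; apply/rowP => i.
move: (H i).
rewrite !mulr2n !(raddfD (@VectorInternalTheory.v2r _ V), raddfN (@VectorInternalTheory.v2r _ V)) /= !mxE => {}H.
move/eqP: H; rewrite eq_sym -subr_eq0 => /eqP H.
apply/eqP; rewrite -subr_eq0; apply/eqP; rewrite -H; ring.
Qed.

Theorem lemma4p2 (K : fieldType) (V : vectType K)
    (br nbr prod : V -> V -> V) :
  [pchar K] =i pred0 ->
  is_lie br -> is_lie nbr ->
  two_step_nilpotent br -> two_step_nilpotent nbr ->
  is_PA br nbr prod ->
  (forall x y,
      opcomm (opadd (Lop prod x) (Rop prod x)) (adop br y)
      = adop br (prod x y + prod y x)) ->
  forall x y,
    opcomm (opadd (Lop prod x) (Rop prod x)) (adop br y)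
      = opcomm (opadd (Lop prod y) (Rop prod y)) (adop br x) /\
    opadd (opscale 2 (opcomm (Lop prod x) (adop br y)))
          (opscale 2 (opcomm (adop br x) (Lop prod y)))
      = opadd (opcomm (adop br y) (adop nbr x)) (opcomm (adop nbr y) (adop br x)).
Proof.
move=> _ [[brlin1 brlin] bralt _] _ brnil _ [_ PA1 _ _] Hs x y.
split; first by rewrite Hs Hs addrC.
have brD u v w : br u (v + w) = br u v + br u w.
  by rewrite -[v]scale1r brlin !scale1r.
have br0 u : br u 0 = 0.
  have := brD u 0 0; rewrite addr0 => /esym /(canRL (addrK _)); by rewrite subrr.
have brN u v : br u (- v) = - br u v.
  by apply/eqP; rewrite -addr_eq0 -brD addNr br0.
have brD1 u v w : br (v + w) u = br v u + br w u.
  by rewrite -[v]scale1r brlin1 !scale1r.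
have brS u v : br u v = - br v u.
  apply/eqP; rewrite -addr_eq0; apply/eqP.
  have := bralt (u + v); rewrite brD brD1 brD1 !bralt add0r addr0 => <-; by rewrite addrC.
have brnil2 u v w : br u (br v w) = 0 by rewrite brS brnil oppr0.
have brB u v w : br u (v - w) = br u v - br u w by rewrite brD brN.
have nE u v : nbr u v = br u v - (prod u v - prod v u).
  by rewrite PA1 opprB addrC subrK.
apply: functional_extensionality => z.
have H1 := congr1 (fun f => f z) (Hs x y).
have H2 := congr1 (fun f => f z) (Hs y x).
rewrite /= /opcomm /opadd /Lop /Rop /adop in H1 H2.
rewrite [prod y x + _]addrC -H1 in H2.
rewrite /opcomm /opadd /opscale /Lop /Rop /adop !nE !brB !brnil2.
rewrite !scaler_nat.
rewrite !brD in H2.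
rewrite !sub0r; exact (@zmod_ident K V _ _ _ _ _ _ _ _ H2).
Qed.
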